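(* Let ${\bf p}\in M_n(k)$ be an AST-matrix of order $m$. Then the algebra $\mathcal O_{{\bf p},{\bf 1}}(S_{mn})$ is non-zero.
   Context: $k$ is a field of characteristic zero, $m,n\ge 2$ are integers, and $\xi\in k$ is a primitive $m$-th root of unity. For $i\in\{1,\dots,mn\}$ put $i^*=\lceil i/m\rceil\in\{1,\dots,n\}$. A matrix ${\bf p}=(p_{ij})\in M_n(k)$ is an AST-matrix if $p_{ii}=1$ and $p_{ij}p_{ji}=1$ for all $i,j$; it has order $m$ if $p_{ij}^m=1$ for all $i,j$; ${\bf 1}$ denotes the AST-matrix with all entries $1$. For $i,j,k,l\in\{1,\dots,mn\}$ put $R^{lk}_{ij}({\bf p})=\delta_{i^*k^*}\delta_{j^*l^*}\sum_{r,s=0}^{m-1}\xi^{r(i-k)+s(j-l)}p_{j^*i^*}^{rs}$. For AST-matrices ${\bf p},{\bf q}$ of order $m$, $\mathcal O_{{\bf q},{\bf p}}(S_{mn})$ is the universal algebra with generators $x_{ij}$, $1\le i,j\le mn$, and relations $x_{ij}x_{ik}=\delta_{jk}x_{ij}$, $x_{ji}x_{ki}=\delta_{jk}x_{ji}$, $\sum_{l=1}^{mn}x_{il}=1=\sum_{l=1}^{mn}x_{li}$ for $1\le i,j,k\le mn$, and $\sum_{k,l}R^{lk}_{ij}({\bf p})x_{\alpha l}x_{\beta k}=\sum_{k,l}R^{\alpha\beta}_{lk}({\bf q})x_{li}x_{kj}$ for $1\le i,j,\alpha,\beta\le mn$. *)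

(* Defs.v *)
From HB Require Import structures.
From mathcomp Require Import all_boot all_order all_algebra.
Set Implicit Arguments. Unset Strict Implicit. Unset Printing Implicit Defensive.
Import Order.TTheory GRing.Theory Num.Theory.
Local Open Scope ring_scope.

(* Indices 1..mn of the paper are represented 0-based by 'I_(m*n);
   index i (0-based) corresponds to i+1 in the paper, and
   i^* = ceil((i+1)/m) corresponds to the 0-based index i %/ m : 'I_n. *)
Lemma star_proof (m n : nat) (i : 'I_(m * n)) : (i %/ m < n)%N.
Proof.
case: m i => [|m] [i hi] /=; first by [].
by rewrite ltn_divLR // mulnC.
Qed.

Definition star (m n : nat) (i : 'I_(m * n)) : 'I_n := Ordinal (star_proof i).

Definition is_AST (k : fieldType) (n : nat) (P : 'M[k]_n) : Prop :=
  forall i j, P i i = 1 /\ P i j * P j i = 1.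

Definition has_order (k : fieldType) (n m : nat) (P : 'M[k]_n) : Prop :=
  forall i j, P i j ^+ m = 1.

Definition ones_mx (k : fieldType) (n : nat) : 'M[k]_n := const_mx 1.

(* Rcoef xi P i j k l  =  R^{lk}_{ij}(P) *)
Definition Rcoef (k : fieldType) (m n : nat) (xi : k) (P : 'M[k]_n)
    (i j a b : 'I_(m * n)) : k :=
  (star i == star a)%:R * (star j == star b)%:R *
  \sum_(r < m) \sum_(s < m)
     xi ^ ((r%:Z) * (i%:Z - a%:Z) + (s%:Z) * (j%:Z - b%:Z))
     * P (star j) (star i) ^+ (r * s).

Definition O_rels (k : fieldType) (m n : nat) (xi : k) (Q P : 'M[k]_n)
    (A : algType k) (x : 'I_(m * n) -> 'I_(m * n) -> A) : Prop :=
  [/\ (forall i j l, x i j * x i l = (j == l)%:R * x i j),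
      (forall i j l, x j i * x l i = (j == l)%:R * x j i),
      (forall i, \sum_(l < m * n) x i l = 1),
      (forall i, \sum_(l < m * n) x l i = 1) &
      (forall i j al be,
         \sum_(a < m * n) \sum_(b < m * n)
            Rcoef xi P i j a b *: (x al b * x be a)
         = \sum_(a < m * n) \sum_(b < m * n)
            Rcoef xi Q b a be al *: (x b i * x a j))].

(* The universal algebra O_{Q,P}(S_{mn}) is non-zero iff some k-algebra with
   1 <> 0 contains elements satisfying its defining relations (universal
   property: a model gives a unital map O -> A; conversely O is a model). *)
Definition O_nonzero (k : fieldType) (m n : nat) (xi : k) (Q P : 'M[k]_n)
  : Prop :=
  exists (A : algType k) (x : 'I_(m * n) -> 'I_(m * n) -> A),
    O_rels xi Q P x /\ (1 : A) != 0.

(* Main.v *)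
From HB Require Import structures.
From mathcomp Require Import all_boot all_order all_algebra.
From mathcomp Require Import ring zify.
Require Import Defs.
Import Order.TTheory GRing.Theory Num.Theory.
Local Open Scope ring_scope.

Section Roots.
Context {k : fieldType} {m : nat} {xi : k}.
Hypothesis hxi : m.-primitive_root xi.

Lemma m_gt0 : (0 < m)%N. Proof. exact: prim_order_gt0 hxi. Qed.
Lemma xi_neq0 : xi != 0. Proof. by rewrite (prim_root_eq0 hxi) -lt0n m_gt0. Qed.
Lemma xi_m : xi ^+ m = 1. Proof. exact: prim_expr_order. Qed.

Lemma xiD (a b : int) : xi ^ (a + b) = xi ^ a * xi ^ b.
Proof. exact: expfzDr xi_neq0. Qed.

Lemma xi_mod (z : int) : xi ^ z = xi ^ (z %% m)%Z.
Proof.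
rewrite {1}(divz_eq z m) xiD -exprz_exp exprzAC -exprnP xi_m exp1rz mul1r //.
Qed.

Lemma xi_eq1 (z : int) : (xi ^ z == 1) = (m %| z)%Z.
Proof.
rewrite xi_mod.
have hm : (m%:Z != 0) by have := m_gt0; lia.
have := modz_ge0 z hm; have := ltz_pmod z (m_gt0 : (0 < m%:Z)).
case: (z %% m)%Z (@dvdz_mod0P m z) => [r|r] hP // hlt _.
rewrite -exprnP -(prim_order_dvd hxi).
apply/idP/idP.
  move=> hdv; apply/hP; move: hlt hdv; rewrite ltz_nat.
  case: r {hP} => // r hlt /(dvdn_leq (ltn0Sn r)) hle.
  by move: (leq_trans hlt hle); rewrite ltnn.
by move/hP => [->].
Qed.

Lemma xi_pow_m (z : int) : (xi ^ z) ^+ m = 1.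
Proof. by rewrite exprnP exprz_exp mulrC -exprz_exp -exprnP xi_m exp1rz. Qed.

Lemma geo (z : int) :
  \sum_(t < m) (xi ^ z) ^+ t = ((m %| z)%Z)%:R * m%:R.
Proof.
case: (boolP (m %| z)%Z) => hd.
  have /eqP h1 : xi ^ z == 1 by rewrite xi_eq1.
  rewrite h1 mul1r; under eq_bigr do rewrite expr1n.
  by rewrite sumr_const card_ord.
rewrite mul0r; have h1 : xi ^ z - 1 != 0 by rewrite subr_eq0 xi_eq1.
have := subrX1 (xi ^ z) m; rewrite xi_pow_m subrr => /esym /eqP.
by rewrite mulf_eq0 (negPf h1) /= => /eqP.
Qed.

End Roots.
Section Blocks.
Variables (m n : nat).
Hypothesis hm : (0 < m)%N.

Lemma blk_proof (u : 'I_n) (t : 'I_m) : (u * m + t < m * n)%N.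
Proof. have := ltn_ord u; have := ltn_ord t; nia. Qed.

Definition blk u t : 'I_(m * n) := Ordinal (blk_proof u t).

Lemma star_blk u t : star (blk u t) = u.
Proof. apply: val_inj => /=; rewrite divnMDl // divn_small //= addn0 //. Qed.

Lemma blk_val u t : (blk u t : nat) = (u * m + t)%N. Proof. by []. Qed.

Definition unblk (b : 'I_(m * n)) : 'I_n * 'I_m :=
  (star b, Ordinal (ltn_pmod b hm)).

Lemma sum_blocks (V : nmodType) (F : 'I_(m * n) -> V) :
  \sum_(b < m * n) F b = \sum_(u < n) \sum_(t < m) F (blk u t).
Proof.
rewrite pair_bigA /= (reindex (fun p : 'I_n * 'I_m => blk p.1 p.2)) //.
exists unblk => [[u t] _|b _] /=.
  rewrite /unblk; congr pair; first exact: star_blk.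
  by apply: val_inj => /=; rewrite modnMDl modn_small.
by apply: val_inj => /=; rewrite -divn_eq.
Qed.

End Blocks.

Lemma dvd_nat_diff (m a b : nat) : (0 < m)%N ->
  (m %| a%:Z - b%:Z)%Z = (a %% m == b %% m)%N.
Proof.
move=> hm; rewrite -eqz_mod_dvd !modz_nat.
by apply/eqP/eqP => [[]|->].
Qed.

Lemma dvd_small (m r : nat) (e : int) : (r < m)%N -> (e = 1 \/ e = -1) ->
  (m %| r%:Z * e)%Z = (r == 0)%N.
Proof.
move=> hr he; have -> : (m %| r%:Z * e)%Z = (m %| r)%N.
  by case: he => ->; rewrite ?mulr1 ?mulrN1 dvdzE ?abszN.
case: r hr => [|r] hr; first by rewrite dvdn0.
apply/negbTE/negP => /(dvdn_leq (ltn0Sn r)) hle.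
by move: (leq_trans hr hle); rewrite ltnn.
Qed.

Lemma sum_delta (R : pzRingType) (V : lmodType R) (I : finType) (i : I)
   (c : I -> R) (F : I -> V) :
  \sum_j ((i == j)%:R * c j) *: F j = c i *: F i.
Proof.
rewrite (bigD1 i) //= eqxx mul1r big1 ?addr0 // => j hj.
by rewrite eq_sym (negPf hj) mul0r scale0r.
Qed.

Lemma shift_sum (V : nmodType) (m : nat) (f : nat -> V) : (0 < m)%N ->
  f m = f 0%N -> \sum_(r < m) f r.+1 = \sum_(r < m) f r.
Proof.
case: m => // m _ hf.
by rewrite big_ord_recr big_ord_recl /= hf addrC.
Qed.

Section Model.
Variables (k : fieldType) (m n : nat) (xi : k) (P : 'M[k]_n).
Hypothesis hxi : m.-primitive_root xi.
Variables (A : algType k) (U : 'I_n -> A).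
Hypothesis hUm : forall u, U u ^+ m = 1.
Hypothesis hcomm : forall u v, U v * U u = P v u *: (U u * U v).

Let hm := m_gt0 hxi.
Let xiD' := xiD hxi.
Let geo' := geo hxi.
Let xi_pow_m' := xi_pow_m hxi.
Let hm0 : (m%:R : k) != 0. Proof. exact: prim_root_natf_neq0 hxi. Qed.

Definition E u (d : int) : A :=
  (m%:R)^-1 *: \sum_(r < m) xi ^ (- (r%:Z * d)) *: U u ^+ r.

Lemma xi_addm (z w : int) : xi ^ (z + w * m%:Z) = xi ^ z.
Proof. by rewrite xiD' -exprz_exp -exprnP xi_pow_m' mulr1. Qed.

Lemma UE u d : U u * E u d = xi ^ d *: E u d.
Proof.
rewrite /E -scalerAr scalerA mulrC -scalerA; congr (_ *: _).
rewrite mulr_sumr scaler_sumr.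
under eq_bigr do rewrite -scalerAr -exprS.
under [RHS]eq_bigr do rewrite scalerA.
pose f (r : nat) := (xi ^ d * xi ^ (- (r%:Z * d))) *: U u ^+ r.
transitivity (\sum_(r < m) f r.+1).
  apply: eq_bigr => r _; rewrite /f; congr (_ *: _).
  by rewrite -xiD'; congr (_ ^ _); rewrite intS; ring.
apply: shift_sum => //.
rewrite /f hUm expr0; congr (_ *: _).
rewrite -!xiD' -(xi_addm (d + - (0%:Z * d)) (- d)); congr (xi ^ _); ring.
Qed.

Lemma UsE u s d : U u ^+ s * E u d = xi ^ (s%:Z * d) *: E u d.
Proof.
elim: s => [|s IH]; first by rewrite expr0 mul1r mul0r expr0z scale1r.
rewrite exprSr -mulrA UE -scalerAr IH scalerA -xiD'; congr (xi ^ _ *: _).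
by rewrite intS; ring.
Qed.

Lemma EE u d d' : E u d' * E u d = ((m %| d - d')%Z)%:R *: E u d.
Proof.
rewrite {1}/E -scalerAl mulr_suml.
under eq_bigr do rewrite -scalerAl UsE scalerA.
rewrite -scaler_suml scalerA; congr (_ *: _).
transitivity ((m%:R)^-1 * \sum_(i < m) (xi ^ (d - d')) ^+ i).
  congr (_ * _); apply: eq_bigr => r _.
  by rewrite exprnP exprz_exp -xiD'; congr (_ ^ _); ring.
by rewrite geo' mulrCA mulVf // mulr1.
Qed.

Lemma Esum u (z e : int) : (e = 1 \/ e = -1) ->
  \sum_(t < m) E u (z + e * t%:Z) = 1.
Proof.
move=> he; rewrite /E -scaler_sumr exchange_big /=.
under eq_bigr => r _.
  rewrite -scaler_suml.
  have -> : \sum_(i < m) xi ^ (- (r%:Z * (z + e * i%:Z)))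
          = xi ^ (- (r%:Z * z)) * \sum_(i < m) (xi ^ (- (r%:Z * e))) ^+ i.
    rewrite mulr_sumr; apply: eq_bigr => i _.
    by rewrite exprnP exprz_exp -xiD'; congr (_ ^ _); ring.
  rewrite geo' -(mulrN (r%:Z) e) (@dvd_small m r _ (ltn_ord r)); last by case: he => ->; [right|left]; rewrite ?opprK.
  over.
rewrite (bigD1 (Ordinal hm)) //= big1 ?addr0.
  by rewrite mul0r oppr0 expr0z mul1r mul1r expr0 scalerA mulVf // scale1r.
move=> r hr; have -> : (r == 0 :> nat) = false.
  by apply/negbTE; apply: contra hr => /eqP h; apply/eqP/val_inj.
by rewrite mul0r mulr0 scale0r.
Qed.


Definition X (i j : 'I_(m * n)) : A :=
  (star i == star j)%:R *: E (star i) (i%:Z - j%:Z).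

Lemma same_blk (j l : 'I_(m * n)) : star j = star l ->
  (m %| j%:Z - l%:Z)%Z = (j == l).
Proof.
move=> h; rewrite dvd_nat_diff //; apply/eqP/eqP => [hm'|->//].
apply: val_inj; rewrite /= (divn_eq j m) (divn_eq l m) hm'.
by move/(congr1 val): h => /= ->.
Qed.

Lemma X0 (i j : 'I_(m * n)) : star i != star j -> X i j = 0.
Proof. by move=> h; rewrite /X (negPf h) scale0r. Qed.

Lemma X1 (i j : 'I_(m * n)) : star i = star j -> X i j = E (star i) (i%:Z - j%:Z).
Proof. by move=> h; rewrite /X h eqxx scale1r. Qed.

Lemma rel1 i j l : X i j * X i l = (j == l)%:R * X i j.
Proof.
case: (eqVneq (star i) (star j)) => hij; last by rewrite X0 // mul0r mulr0.
case: (eqVneq (star i) (star l)) => hil.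
  rewrite !X1 // EE.
  have -> : (i%:Z - l%:Z - (i%:Z - j%:Z)) = j%:Z - l%:Z by ring.
  rewrite same_blk -?hij -?hil //.
  by case: (eqVneq j l) => [->|_]; rewrite ?scale1r ?mul1r ?scale0r ?mul0r.
rewrite [X _ l]X0 // mulr0; case: (eqVneq j l) => [hjl|_]; last by rewrite mul0r.
by move: hil; rewrite -hjl hij eqxx.
Qed.

Lemma rel2 i j l : X j i * X l i = (j == l)%:R * X j i.
Proof.
case: (eqVneq (star j) (star i)) => hij; last by rewrite X0 // mul0r mulr0.
case: (eqVneq (star l) (star i)) => hil.
  rewrite !X1 // hil -hij EE.
  have -> : (l%:Z - i%:Z - (j%:Z - i%:Z)) = l%:Z - j%:Z by ring.
  rewrite same_blk ?hij ?hil // eq_sym.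
  by case: (eqVneq j l) => [->|_]; rewrite ?scale1r ?mul1r ?scale0r ?mul0r.
rewrite [X l _]X0 // mulr0; case: (eqVneq j l) => [hjl|_]; last by rewrite mul0r.
by move: hil; rewrite -hjl hij eqxx.
Qed.

Lemma rel3 i : \sum_(l < m * n) X i l = 1.
Proof.
rewrite (@sum_blocks m n hm) (bigD1 (star i)) //= [X in _ + X]big1 ?addr0.
  under eq_bigr do rewrite X1 ?star_blk // blk_val.
  rewrite -[RHS](Esum (star i) (i%:Z - (star i * m)%N%:Z) (-1) (or_intror erefl)).
  by apply: eq_bigr => t _; congr E; rewrite PoszD; ring.
move=> u hu; apply: big1 => t _; rewrite X0 // star_blk eq_sym //.
Qed.

Lemma rel4 i : \sum_(l < m * n) X l i = 1.
Proof.
rewrite (@sum_blocks m n hm) (bigD1 (star i)) //= [X in _ + X]big1 ?addr0.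
  under eq_bigr do rewrite X1 ?star_blk // blk_val.
  rewrite -[RHS](Esum (star i) ((star i * m)%N%:Z - i%:Z) 1 (or_introl erefl)).
  by apply: eq_bigr => t _; congr E; rewrite PoszD; ring.
move=> u hu; apply: big1 => t _; rewrite X0 // star_blk //.
Qed.


Lemma Upow_comm u v r s :
  U v ^+ s * U u ^+ r = P v u ^+ (r * s) *: (U u ^+ r * U v ^+ s).
Proof.
have h1 : forall r, U v * U u ^+ r = P v u ^+ r *: (U u ^+ r * U v).
  elim=> [|r' IH]; first by rewrite !expr0 mulr1 mul1r scale1r.
  by rewrite !exprSr mulrA IH -scalerAl -(mulrA _ (U v)) (hcomm u v) -scalerAr scalerA mulrA.
elim: s => [|s IH]; first by rewrite !expr0 muln0 expr0 mulr1 mul1r scale1r.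
rewrite exprS -mulrA IH -scalerAr (mulrA (U v)) h1 -scalerAl scalerA -!mulrA.
by rewrite -exprD mulnS addnC.
Qed.

Lemma sb (a b : 'I_(m * n)) :
  ((star a == star b)%:R * ((m %| a%:Z - b%:Z)%Z)%:R : k) = (a == b)%:R.
Proof.
case: (eqVneq (star a) (star b)) => h.
  by rewrite same_blk // mul1r.
rewrite mul0r; case: (eqVneq a b) => // hab.
by move: h; rewrite hab eqxx.
Qed.

Lemma Rone (i j a b : 'I_(m * n)) :
  Rcoef xi (ones_mx k n) i j a b = (i == a)%:R * (j == b)%:R * (m * m)%:R.
Proof.
rewrite /Rcoef.
under eq_bigr do under eq_bigr do rewrite mxE expr1n mulr1 xiD'.
rewrite -big_distrlr /=.
have hg : forall z : int, \sum_(r < m) xi ^ (r%:Z * z) = ((m %| z)%Z)%:R * m%:R.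
  move=> z; rewrite -geo'; apply: eq_bigr => r _.
  by rewrite exprnP exprz_exp mulrC.
rewrite !hg -(sb i a) -(sb j b) natrM; ring.
Qed.

Lemma Fourier u (be i : 'I_(m * n)) (r : 'I_m) :
  \sum_(t < m) xi ^ (r%:Z * ((blk m n hm u t)%:Z - be%:Z))
     *: E u ((blk m n hm u t)%:Z - i%:Z)
  = xi ^ (r%:Z * (i%:Z - be%:Z)) *: U u ^+ r.
Proof.
rewrite /E.
under eq_bigr do rewrite scalerA (mulrC (xi ^ _)) -scalerA scaler_sumr.
rewrite -scaler_sumr exchange_big /=.
under eq_bigr do (under eq_bigr do rewrite scalerA; rewrite -scaler_suml).
have hc : forall r' : 'I_m,
   \sum_(t < m) xi ^ (r%:Z * ((blk m n hm u t)%:Z - be%:Z))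
                * xi ^ (- (r'%:Z * ((blk m n hm u t)%:Z - i%:Z)))
   = (r == r')%:R * (xi ^ (r%:Z * (i%:Z - be%:Z)) * m%:R).
  move=> r'.
  transitivity (\sum_(t < m) xi ^ (r'%:Z * i%:Z - r%:Z * be%:Z)
                               * (xi ^ (r%:Z - r'%:Z)) ^+ t).
    apply: eq_bigr => t _.
    rewrite -xiD' exprnP exprz_exp -xiD'.
    rewrite -(xi_addm (r'%:Z * i%:Z - r%:Z * be%:Z + (r%:Z - r'%:Z) * t%:Z)
                     ((r%:Z - r'%:Z) * u%:Z)).
    by congr (xi ^ _); rewrite blk_val PoszD PoszM; ring.
  rewrite -mulr_sumr geo' dvd_nat_diff // !modn_small //.
  case: (eqVneq r r') => [<-|hne]; last first.
    have -> : (r == r' :> nat) = false by apply/negbTE.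
    by rewrite !mul0r mulr0.
  by rewrite eqxx !mul1r; congr (_ * _); congr (xi ^ _); ring.
under eq_bigr do rewrite hc.
rewrite (@sum_delta k A _ r (fun r' => xi ^ (r%:Z * (i%:Z - be%:Z)) * m%:R)
                   (fun r' : 'I_m => U u ^+ r')).
by rewrite scalerA mulrCA mulVf // mulr1.
Qed.


Lemma Eprod u v d1 d2 :
  E v d1 * E u d2 = ((m%:R)^-1 * (m%:R)^-1) *:
     \sum_(s < m) \sum_(r < m)
        (xi ^ (- (s%:Z * d1)) * xi ^ (- (r%:Z * d2))) *: (U v ^+ s * U u ^+ r).
Proof.
rewrite /E -scalerAl -scalerAr scalerA; congr (_ *: _).
rewrite mulr_suml; apply: eq_bigr => s _; rewrite mulr_sumr.
by apply: eq_bigr => r _; rewrite -scalerAl -scalerAr scalerA.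
Qed.

Lemma exch4 (V : nmodType) (I : finType) (F : I -> I -> I -> I -> V) :
  \sum_a \sum_b \sum_c \sum_d F a b c d = \sum_c \sum_d \sum_b \sum_a F a b c d.
Proof.
under eq_bigr do rewrite exchange_big.
rewrite exchange_big.
under eq_bigr do under eq_bigr do rewrite exchange_big.
under eq_bigr do rewrite exchange_big.
by under eq_bigr do under eq_bigr do rewrite exchange_big.
Qed.

Lemma rel5 (i j al be : 'I_(m * n)) :
  \sum_(a < m * n) \sum_(b < m * n)
     Rcoef xi (ones_mx k n) i j a b *: (X al b * X be a)
  = \sum_(a < m * n) \sum_(b < m * n)
     Rcoef xi P b a be al *: (X b i * X a j).
Proof.
under eq_bigr do under eq_bigr do rewrite Rone -mulrA mulrCA.
under eq_bigr do rewrite (@sum_delta k A _ j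
   (fun b => (i == _)%:R * (m * m)%:R) (fun b => X al b * X be _)).
rewrite (@sum_delta k A _ i (fun a => (m * m)%:R) (fun a => X al j * X be a)).
case: (eqVneq (star be) (star i)) => hbe; last first.
  rewrite [X be i]X0 // mulr0 scaler0; symmetry.
  apply: big1 => a _; apply: big1 => b _.
  case: (eqVneq (star b) (star be)) => h.
    by rewrite [X b i]X0 ?h // mul0r scaler0.
  by rewrite /Rcoef (negPf h) !mul0r scale0r.
case: (eqVneq (star al) (star j)) => hal; last first.
  rewrite [X al j]X0 // mul0r scaler0; symmetry.
  apply: big1 => a _; apply: big1 => b _.
  case: (eqVneq (star a) (star al)) => h.
    by rewrite [X a j]X0 ?h // mulr0 scaler0.
  by rewrite /Rcoef [star a == _](negPf h) !(mul0r, mulr0) scale0r.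
set u := star i in hbe *; set v := star j in hal *.
rewrite (@sum_blocks m n hm) (bigD1 v) //= [X in _ + X]big1 ?addr0; last first.
  move=> v' hv'; apply: big1 => ta _; apply: big1 => b _.
  by rewrite [X _ j]X0 ?star_blk // mulr0 scaler0.
under eq_bigr => ta _.
  rewrite (@sum_blocks m n hm) (bigD1 u) //= [X in _ + X]big1 ?addr0; last first.
    by move=> u' hu'; apply: big1 => tb _; rewrite [X _ i]X0 ?star_blk // mul0r scaler0.
  over.
under eq_bigr => ta _ do under eq_bigr => tb _ do
  rewrite /Rcoef !star_blk hbe hal eqxx !mul1r X1 ?star_blk // X1 ?star_blk //.
pose G (r s : 'I_m) := (P v u ^+ (r * s) * (xi ^ (r%:Z * (i%:Z - be%:Z))
      * xi ^ (s%:Z * (j%:Z - al%:Z)))) *: (U u ^+ r * U v ^+ s).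
transitivity (\sum_(r < m) \sum_(s < m) G r s).
  rewrite [X al j]X1 ?hal // [X be i]X1 ?hbe // Eprod scalerA.
  have -> : ((m * m)%:R * ((m%:R)^-1 / m%:R) : k) = 1 by rewrite natrM mulrA mulfK // mulfV.
  rewrite scale1r.
  rewrite exchange_big; apply: eq_bigr => r _; apply: eq_bigr => s _.
  rewrite Upow_comm scalerA /G; congr (_ *: _).
  by rewrite mulrC; congr (_ * _); rewrite mulrC; congr (_ * _); congr (xi ^ _); ring.
pose F (ta tb r s : 'I_m) :=
  (P v u ^+ (r * s) * (xi ^ (r%:Z * ((blk m n hm u tb)%:Z - be%:Z))
     * xi ^ (s%:Z * ((blk m n hm v ta)%:Z - al%:Z))))
  *: (E u ((blk m n hm u tb)%:Z - i%:Z) * E v ((blk m n hm v ta)%:Z - j%:Z)).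
transitivity (\sum_ta \sum_tb \sum_r \sum_s F ta tb r s); last first.
  apply: eq_bigr => ta _; apply: eq_bigr => tb _.
  rewrite eqxx mul1r scaler_suml; apply: eq_bigr => r _.
  rewrite scaler_suml; apply: eq_bigr => s _.
  by rewrite /F xiD' mulrC.
rewrite exch4; apply: eq_bigr => r _; apply: eq_bigr => s _.
have -> : G r s = P v u ^+ (r * s) *:
   ((xi ^ (r%:Z * (i%:Z - be%:Z)) *: U u ^+ r) * (xi ^ (s%:Z * (j%:Z - al%:Z)) *: U v ^+ s)).
  by rewrite /G -scalerAl -scalerAr !scalerA mulrA.
rewrite -(Fourier u be i r) -(Fourier v al j s) mulr_suml scaler_sumr.
apply: eq_bigr => tb _; rewrite mulr_sumr scaler_sumr; apply: eq_bigr => ta _.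
rewrite /F -scalerAl -scalerAr !scalerA; congr (_ *: _); ring.
Qed.

End Model.
Section Mat.
Variables (k : fieldType) (m n : nat) (P : 'M[k]_n).
Hypothesis hm : (0 < m)%N.
Hypothesis hAST : forall i j, P i i = 1 /\ P i j * P j i = 1.
Hypothesis hord : forall i j, P i j ^+ m = 1.

Definition T := {ffun 'I_n -> 'I_m}.
Lemma cardT_gt0 : (0 < #|T|)%N.
Proof. by apply/card_gt0P; exists [ffun=> Ordinal hm]. Qed.
Definition N := #|T|.-1.
Lemma eqN : N.+1 = #|T|. Proof. exact: prednK cardT_gt0. Qed.
Definition ev (a : 'I_N.+1) : T := enum_val (cast_ord eqN a).
Definition er (t : T) : 'I_N.+1 := cast_ord (esym eqN) (enum_rank t).
Lemma evK : cancel er ev.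
Proof. by move=> t; rewrite /ev /er cast_ordKV enum_rankK. Qed.
Lemma erK : cancel ev er.
Proof. by move=> a; rewrite /ev /er enum_valK cast_ordK. Qed.

Definition mono (f : T -> T) (c : T -> k) : 'M[k]_N.+1 :=
  \matrix_(a, b) ((ev a == f (ev b))%:R * c (ev b)).

Lemma eq_mono f f' c c' : (forall t, f t = f' t) -> (forall t, c t = c' t) ->
  mono f c = mono f' c'.
Proof. by move=> hf hc; apply/matrixP => a b; rewrite !mxE hf hc. Qed.

Lemma monoM f c g d :
  mono f c * mono g d = mono (f \o g) (fun t => c (g t) * d t).
Proof.
apply/matrixP => a b; rewrite -mulmxE !mxE (bigD1 (er (g (ev b)))) //=.
rewrite big1 ?addr0.
  by rewrite !mxE evK eqxx mul1r mulrA.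
move=> x hx; rewrite !mxE; case: (eqVneq (ev x) (g (ev b))) => h.
  by move: hx; rewrite -h erK eqxx.
by rewrite mul0r mulr0.
Qed.

Lemma mono1 : mono id (fun _ => 1) = 1.
Proof.
apply/matrixP => a b; rewrite !mxE mulr1 /=.
case: (eqVneq a b) => [->|h]; first by rewrite eqxx.
case: (eqVneq (ev a) (ev b)) => // h'.
by move: h; rewrite -(erK a) -(erK b) h' eqxx.
Qed.

Lemma monoZ a f c : a *: mono f c = mono f (fun t => a * c t).
Proof. by apply/matrixP => x y; rewrite !mxE mulrCA. Qed.

Lemma mono_exp f c s :
  mono f c ^+ s = mono (iter s f) (fun t => \prod_(q < s) c (iter q f t)).
Proof.
elim: s => [|s IH].
  by rewrite expr0 -mono1; apply: eq_mono => // t; rewrite big_ord0.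
rewrite exprS IH monoM; apply: eq_mono => // t.
by rewrite big_ord_recr /= mulrC.
Qed.

Definition shift (u : 'I_n) (w : T) : T :=
  [ffun v => if v == u then ordS (w v) else w v].
Definition cc (u : 'I_n) (w : T) : k :=
  \prod_(v < n | (v < u)%N) P u v ^+ (w v).
Definition UU u := mono (shift u) (cc u).

Lemma iter_ordS q (i : 'I_m) : val (iter q (@ordS m) i) = ((i + q) %% m)%N.
Proof.
elim: q => [|q IH] /=; first by rewrite addn0 modn_small.
by rewrite IH -addn1 modnDml -addnA addn1.
Qed.

Lemma iter_shift u q w :
  iter q (shift u) w = [ffun v => if v == u then iter q (@ordS m) (w v) else w v].
Proof.
elim: q => [|q IH] /=; first by apply/ffunP => v; rewrite ffunE; case: ifP => // /eqP ->.
apply/ffunP => v; rewrite !ffunE IH ffunE; case: (eqVneq v u) => //.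
Qed.

Lemma cc_shift u u' w :
  cc u (shift u' w) = (if (u' < u)%N then P u u' else 1) * cc u w.
Proof.
rewrite /cc; case: ifP => h.
  rewrite (bigD1 u') //= [in RHS](bigD1 u') //= mulrA; congr (_ * _).
    rewrite ffunE eqxx /= -exprS.
    exact: expr_mod _ (hord u u').
  apply: eq_bigr => v /andP [_ hv]; rewrite ffunE (negPf hv) //.
rewrite mul1r; apply: eq_bigr => v hv; rewrite ffunE.
case: (eqVneq v u') => // e; by move: hv h; rewrite e => ->.
Qed.

Lemma UUm u : UU u ^+ m = 1.
Proof.
rewrite /UU mono_exp -mono1; apply: eq_mono => t.
  rewrite iter_shift; apply/ffunP => v; rewrite ffunE.
  case: (eqVneq v u) => // _; apply: val_inj; rewrite iter_ordS modnDr modn_small //.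
have -> : \prod_(q < m) cc u (iter q (shift u) t) = \prod_(q < m) cc u t.
  apply: eq_bigr => q _; rewrite /cc; apply: eq_bigr => v hv.
  rewrite iter_shift ffunE; case: (eqVneq v u) => // e.
  by move: hv; rewrite e ltnn.
rewrite prodr_const card_ord /cc -prodrXl; apply: big1 => v _.
by rewrite -exprM mulnC exprM hord expr1n.
Qed.

Lemma UUcomm u v : UU v * UU u = P v u *: (UU u * UU v).
Proof.
rewrite /UU !monoM monoZ; apply: eq_mono => t.
  apply/ffunP => x; rewrite /= !ffunE.
  by case: (eqVneq x u) => [->|hu]; case: (eqVneq u v) => [e|huv] //;
     rewrite ?e ?eqxx //; case: (eqVneq x v) => //= ->; rewrite eq_sym (negPf huv).
rewrite /= !cc_shift.
case: (ltngtP u v) => h.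
- by rewrite mul1r; ring.
- rewrite mul1r; have [_ e] := hAST v u; rewrite mulrA mulrA e mul1r; ring.
- have e : u = v by apply: val_inj.
  by rewrite e (proj1 (hAST v v)); ring.
Qed.

End Mat.

Theorem lemma2p3 (k : fieldType) (m n : nat) (xi : k) (P : 'M[k]_n) :
  [pchar k] =i pred0 ->
  (2 <= m)%N -> (2 <= n)%N ->
  primitive_root_of_unity m xi ->
  is_AST P -> has_order m P ->
  O_nonzero m xi P (ones_mx k n).
Proof.
move=> _ _ _ hxi hAST hord.
have hm := m_gt0 hxi.
pose U := @UU k m n P hm.
have hUm : forall u, U u ^+ m = 1 by move=> u; exact: UUm.
have hc : forall u v, U v * U u = P v u *: (U u * U v).
  by move=> u v; exact: UUcomm.
exists _, (@X k m n xi _ U); split; last exact: oner_neq0.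
split.
- exact: (@rel1 k m n xi hxi _ U hUm).
- exact: (@rel2 k m n xi hxi _ U hUm).
- exact: (@rel3 k m n xi hxi _ U).
- exact: (@rel4 k m n xi hxi _ U).
- move=> i j al be; exact: (@rel5 k m n xi P hxi _ U hc i j al be).
Qed.
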